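(* Let $T=(V,E)$ be a simple graph and let $S=(U,F)$ be a subgraph of $T$ which is a tree. Suppose $T'=(V',E')$ is formed from $T$ by a $1$-dimensional $|F|$-extension which deletes exactly the edges in $F$ and appends a new vertex $v$ incident to $|F|+1$ new edges. Then $T$ is a tree if and only if $T'$ is a tree.
   Context: All graphs are finite and loop-free; multi-graphs may have parallel edges. For a multi-graph $G$ and integers $d\ge 1$, $j\ge 0$, a $d$-dimensional $j$-extension of $G$ forms a new multi-graph $G'$ by deleting a set $F$ of $j$ edges of $G$ and then adding a new vertex $v$ together with $d+j$ new edges joining $v$ to vertices of $G$ (parallel new edges are allowed), in such a way that every endpoint of an edge of $F$ is a neighbour of $v$ in $G'$. (For $d=1$ arbitrary $j\ge 0$ is allowed.) *)

(* Defs.v *)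
(* Multigraphs given by an edge type E with endpoint maps
   src dst : E -> V (unordered: direction is irrelevant everywhere below);
   a (sub)graph is given by a vertex set W and an edge set D. *)
From HB Require Import structures.
From mathcomp Require Import all_boot.
Set Implicit Arguments. Unset Strict Implicit.
Unset Printing Implicit Defensive.

Section MGraph.
Variables (V E : finType) (src dst : E -> V).

Definition joins (e : E) (x y : V) : bool :=
  ((src e == x) && (dst e == y)) || ((src e == y) && (dst e == x)).

Definition adj_in (W : {set V}) (D : {set E}) : rel V :=
  fun x y => [&& x \in W, y \in W & [exists e in D, joins e x y]].

Definition connected_in (W : {set V}) (D : {set E}) : Prop :=
  forall x y, x \in W -> y \in W -> connect (adj_in W D) x y.

Definition has_cycle_in (W : {set V}) (D : {set E}) : Prop :=
  exists k (xs : 'I_k.+1 -> V) (es : 'I_k.+1 -> E),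
    [/\ injective xs, injective es,
        (forall i, xs i \in W), (forall i, es i \in D) &
        (forall i, joins (es i) (xs i) (xs (ordS i)))].

Definition is_tree (W : {set V}) (D : {set E}) : Prop :=
  [/\ W != set0, (forall e, e \in D -> src e \in W /\ dst e \in W),
      connected_in W D & ~ has_cycle_in W D].

Definition simple_graph : Prop :=
  (forall e, src e != dst e) /\
  (forall e1 e2, joins e1 (src e2) (dst e2) -> e1 = e2).

End MGraph.

(* The 1-dimensional |F|-extension: vertices option V (new vertex = None),
   edges E + 'I_(#|F|).+1, with the edges of F deleted; the new edge inr i
   joins None and Some (nbr i). *)
Section Ext.
Variables (V E : finType).

Definition ext_src (src : E -> V) (F : {set E}) (nbr : 'I_(#|F|).+1 -> V) (x : E + 'I_(#|F|).+1) : option V :=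
  match x with inl e => Some (src e) | inr _ => None end.
Definition ext_dst (dst : E -> V) (F : {set E}) (nbr : 'I_(#|F|).+1 -> V) (x : E + 'I_(#|F|).+1) : option V :=
  match x with inl e => Some (dst e) | inr i => Some (nbr i) end.
Definition ext_edges (F : {set E}) : {set E + 'I_(#|F|).+1} :=
  [set x | match x with inl e => e \notin F | inr _ => true end].
End Ext.
Arguments ext_src [V E] src F nbr _.
Arguments ext_dst [V E] dst F nbr _.

(* Main.v *)
Require Import Defs.
From mathcomp Require Import all_boot.
From mathcomp Require Import zify.
From Stdlib Require Import Lia.
Set Implicit Arguments. Unset Strict Implicit. Unset Printing Implicit Defensive.

Lemma joins_sym (V E : finType) (src dst : E -> V) e x y :
  joins src dst e x y = joins src dst e y x.
Proof. by rewrite /joins orbC. Qed.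

Lemma joins_inv (V E : finType) (src dst : E -> V) e a b c d :
  joins src dst e a b -> joins src dst e c d ->
  (a = c /\ b = d) \/ (a = d /\ b = c).
Proof.
rewrite /joins => /orP[/andP[/eqP<- /eqP<-]|/andP[/eqP<- /eqP<-]]
  /orP[/andP[/eqP<- /eqP<-]|/andP[/eqP<- /eqP<-]]; tauto.
Qed.

Lemma adj_sym (V E : finType) (src dst : E -> V) (W : {set V}) (D : {set E}) :
  symmetric (adj_in src dst W D).
Proof.
move=> x y; rewrite /adj_in; apply/and3P/and3P => -[? ? /existsP[e /andP[eD j]]];
  split=> //; apply/existsP; exists e; by rewrite eD joins_sym.
Qed.

Lemma cyc_of_conn (V E : finType) (src dst : E -> V) (W : {set V}) (D : {set E}) e a b :
  e \in D -> joins src dst e a b -> a \in W ->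
  connect (adj_in src dst W (D :\ e)) a b -> has_cycle_in src dst W D.
Proof.
move=> eD jab aW /connectP[p0 p0P lp0].
move: jab; rewrite lp0; case: (shortenP p0P) => s sP us _ {p0P lp0 b} jab.
have adjs : forall i, i < size s ->
  adj_in src dst W (D :\ e) (nth a (a :: s) i) (nth a (a :: s) i.+1).
  by move=> i lt; move/(pathP a): sP => /(_ i lt).
have inW : forall i, i <= size s -> nth a (a :: s) i \in W.
  case=> [|i] // lt; by case/and3P: (adjs i lt).
case: (ltnP 0 (size s)) => [s0|].
- pose es (i : 'I_(size s).+1) := if (i : nat) < size s then
    odflt e [pick f in D :\ e | joins src dst f (nth a (a :: s) i) (nth a (a :: s) i.+1)]
    else e.
  have esP : forall i : 'I_(size s).+1, i < size s ->
     es i \in D :\ e /\ joins src dst (es i) (nth a (a :: s) i) (nth a (a :: s) i.+1).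
    move=> i lt; rewrite /es lt; case: pickP => [f /andP[]|] //.
    case/and3P: (adjs i lt) => _ _ /existsP[f /andP[fD fj]] /(_ f).
    by rewrite fD fj.
  exists (size s), (fun i => nth a (a :: s) i), es; split.
  + move=> i j /eqP; rewrite nth_uniq // => /eqP; exact: ord_inj.
  + move=> i j; case: (ltnP i (size s)) => [li|gi]; case: (ltnP j (size s)) => [lj|gj].
    * case: (esP i li) => _ ji; case: (esP j lj) => _ jj eij; rewrite eij in ji.
      case: (joins_inv ji jj) => [[/eqP h _]|[/eqP h1 /eqP h2]].
        by move: h; rewrite nth_uniq // ?ltnS 1?ltnW // => /eqP; apply: ord_inj.
      move: h1 h2; rewrite !nth_uniq // ?ltnS 1?ltnW // => /eqP h1 /eqP h2.
      by move: h1 h2; lia.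
    * case: (esP i li) => /setD1P[ne _] _ eij; move: ne.
      rewrite eij /es ltnNge gj /=. by move/negP.
    * case: (esP j lj) => /setD1P[ne _] _ eij; move: ne.
      rewrite -eij /es ltnNge gi /=. by move/negP.
    * move=> _; apply: ord_inj; have := ltn_ord i; have := ltn_ord j; lia.

  + move=> i; apply: inW; by rewrite -ltnS.
  + move=> i; case: (ltnP i (size s)) => [li|gi]; first by case: (esP i li) => /setD1P[].
    by rewrite /es ltnNge gi.
  + move=> i; case: (ltnP i (size s)) => [li|gi].
    * case: (esP i li) => _; congr joins; rewrite /ordS /= modn_small //.
    * have ei : (i : nat) = size s by apply/eqP; rewrite eqn_leq gi -ltnS ltn_ord.
      rewrite /es ei ltnn /ordS /= ei modnn /= joins_sym.
      by rewrite -last_nth.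
- rewrite leqn0 size_eq0 => /eqP s0; subst s.
  exists 0, (fun _ => a), (fun _ => e); split => //.
  + by move=> i j _; apply: ord_inj; rewrite !ord1.
  + by move=> i j _; apply: ord_inj; rewrite !ord1.
Qed.

Lemma cyc_mono (V E : finType) (src dst : E -> V) (W1 W : {set V}) (D1 D : {set E}) :
  W1 \subset W -> D1 \subset D -> has_cycle_in src dst W1 D1 -> has_cycle_in src dst W D.
Proof.
move=> /subsetP sW /subsetP sD [k [xs [es [h1 h2 h3 h4 h5]]]].
by exists k, xs, es; split => // i; [apply: sW | apply: sD].
Qed.

Lemma connect_symA (V E : finType) (src dst : E -> V) (W : {set V}) (D : {set E}) :
  connect_sym (adj_in src dst W D).
Proof. exact/sym_connect_sym/adj_sym. Qed.

Lemma conn_remove (V E : finType) (src dst : E -> V) (W : {set V}) (D : {set E}) :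
  connected_in src dst W D -> has_cycle_in src dst W D ->
  exists2 e, e \in D & connected_in src dst W (D :\ e).
Proof.
move=> hc [k [xs [es [xinj einj xW eD hj]]]].
exists (es ord0) => //.
set A' := adj_in src dst W (D :\ es ord0).
pose v n := xs (inord (n %% k.+1)).
have key : forall n, 0 < n <= k.+1 -> connect A' (v 1) (v n).
  elim=> [//|n IH] /andP[_ hn].
  case: n IH hn => [|n] IH hn; first by [].
  apply: connect_trans (IH _) _; first by apply/andP; split => //; lia.
  apply: connect1; rewrite /A' /adj_in !xW /=; apply/existsP; exists (es (inord n.+1)).
  apply/andP; split.
    apply/setD1P; split => //; apply/eqP => /einj /(congr1 val) /=.
    by rewrite inordK //; lia.
  have e1 : (inord (n.+1 %% k.+1) : 'I_k.+1) = inord n.+1 by rewrite modn_small.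
  have e2 : (inord (n.+2 %% k.+1) : 'I_k.+1) = ordS (inord n.+1).
    by apply: ord_inj; rewrite /= !inordK ?ltn_pmod //; lia.
  by rewrite /v e1 e2.
have kk : connect A' (xs (ordS ord0)) (xs ord0).
  have := key k.+1; rewrite /v modnn.
  have -> : (inord (1 %% k.+1) : 'I_k.+1) = ordS ord0.
    by apply: ord_inj; rewrite /= inordK ?ltn_pmod.
  have -> : (inord 0 : 'I_k.+1) = ord0 by apply: ord_inj; rewrite /= inordK.
  by apply; lia.
have sub : forall x y, adj_in src dst W D x y -> connect A' x y.
  move=> x y /and3P[xW' yW' /existsP[f /andP[fD fj]]].
  case: (eqVneq f (es ord0)) => [fe|fne].
    subst f; case: (joins_inv fj (hj ord0)) => -[-> ->] //.
    by rewrite connect_symA.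
  apply: connect1; rewrite /A' /adj_in xW' yW' /=; apply/existsP; exists f.
  by rewrite fj andbT; apply/setD1P.
move=> x y xW' yW'; exact: connect_sub sub _ _ (hc x y xW' yW').
Qed.

Lemma conn_card (V E : finType) (src dst : E -> V) (W : {set V}) (D : {set E}) r :
  r \in W -> connected_in src dst W D -> #|W| <= #|D| + 1.
Proof.
move=> rW hc.
set A := adj_in src dst W D.
pose Pb x n := (x \notin W) || [exists t : n.-tuple V, path A r t && (last r t == x)].
have ex : forall x, exists n, Pb x n.
  move=> x; case: (boolP (x \in W)) => xW; last by exists 0; rewrite /Pb xW.
  case/connectP: (hc r x rW xW) => p pP lp; exists (size p).
  apply/orP; right; apply/existsP; exists (in_tuple p) => /=.
  by rewrite pP lp eqxx.
pose d x := ex_minn (ex x).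
have dmin : forall y n, Pb y n -> d y <= n.
  by move=> y n; rewrite /d; case: ex_minnP => m _; apply.
have dP : forall y, Pb y (d y) by move=> y; rewrite /d; case: ex_minnP.
have par : forall x, x \in W -> x != r -> exists e, (e \in D) && [exists y, joins src dst e y x && (d y < d x)].
  move=> x xW xr; have := dP x; rewrite /Pb xW /= => /existsP[t /andP[tP /eqP lt]].
  move: tP lt; case: t => t /= /eqP st; case/lastP: t st => [|q z] st.
    by move=> _ /= ex_; rewrite ex_ eqxx in xr.
  rewrite rcons_path last_rcons => /andP[qP azq] ez; subst z.
  case/and3P: azq => _ _ /existsP[e /andP[eD ej]].
  exists e; rewrite eD /=; apply/existsP; exists (last r q); rewrite ej /=.
  have : d (last r q) <= size q.
    apply: dmin; apply/orP; right; apply/existsP; exists (in_tuple q) => /=.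
    by rewrite qP eqxx.
  by rewrite -st size_rcons.
pose f x := [pick e in D | [exists y, joins src dst e y x && (d y < d x)]].
have fP : forall x, x \in W :\ r -> exists2 e, f x = Some e & (e \in D) && [exists y, joins src dst e y x && (d y < d x)].
  move=> x /setD1P[xr xW]; rewrite /f; case: pickP => [e he|none]; first by exists e.
  by case: (par x xW xr) => e he; rewrite none in he.
have finj : {in W :\ r &, injective f}.
  move=> x x' hx hx'; case: (fP x hx) => e -> /andP[_ /existsP[y /andP[jy dy]]].
  case: (fP x' hx') => e' -> /andP[_ /existsP[y' /andP[jy' dy']]] [ee]; subst e'.
  case: (joins_inv jy jy') => -[e1 e2] //; subst; lia.
have : #|f @: (W :\ r)| <= #|Some @: D|.
  apply: subset_leq_card; apply/subsetP => o /imsetP[x hx ->].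
  case: (fP x hx) => e -> /andP[eD _]; exact: imset_f.
rewrite (card_in_imset finj) card_imset; last by move=> ? ? [].
by rewrite (cardsD1 r W) rW; lia.
Qed.

Lemma acyc_card (V E : finType) (src dst : E -> V) :
  forall n (W : {set V}) (D : {set E}), #|D| <= n ->
  (forall e, e \in D -> src e \in W /\ dst e \in W) ->
  ~ has_cycle_in src dst W D -> forall w, w \in W -> #|D| < #|W|.
Proof.
elim=> [|n IH] W D hn hends hac w wW.
  by move: hn; rewrite leqn0 => /eqP ->; rewrite (cardsD1 w W) wW.
case: (set_0Vmem D) => [->|[e eD]]; first by rewrite cards0 (cardsD1 w W) wW.
set a := src e; set b := dst e.
set D' := D :\ e.
have nab : ~~ connect (adj_in src dst W D') a b.
  apply/negP => hc; apply: hac; apply: (cyc_of_conn eD _ _ hc).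
    by rewrite /joins /a /b !eqxx.
  by case: (hends e eD).
set C := [set x | connect (adj_in src dst W D') a x].
set P := [set f | src f \in C].
have D'D : D' \subset D by apply: subsetDl.
have aW : a \in W by case: (hends e eD).
have bW : b \in W by case: (hends e eD).
have adjf : forall f, f \in D' -> adj_in src dst W D' (src f) (dst f).
  move=> f fD; have [sW dW] := hends f (subsetP D'D f fD).
  rewrite /adj_in sW dW /=; apply/existsP; exists f; by rewrite fD /joins !eqxx.
have h1 := IH (W :&: C) (D' :&: P).
have h2 := IH (W :\: C) (D' :\: P).
have cD' : #|D'| < #|D| by rewrite (cardsD1 e D) eD.
have := cardsID P D'; have := cardsID C W.
have lt1 : #|D' :&: P| < #|W :&: C|.
  apply: (h1 _ _ _ a).
  - have := subset_leq_card (subsetIl D' P); lia.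
  - move=> f /setIP[fD fP]; move: fP; rewrite inE => sC.
    have [sW dW] := hends f (subsetP D'D f fD).
    rewrite !in_setI sW dW sC /=; split => //.
    move: sC; rewrite /C !inE => sC; apply: connect_trans sC (connect1 (adjf f fD)).
  - by move=> /(cyc_mono (subsetIl _ _) (subset_trans (subsetIl _ _) D'D)).
  - by rewrite in_setI aW /C inE connect0.
have lt2 : #|D' :\: P| < #|W :\: C|.
  apply: (h2 _ _ _ b).
  - have := subset_leq_card (subsetDl D' P); lia.
  - move=> f /setDP[fD fP]; move: fP; rewrite inE => sC.
    have [sW dW] := hends f (subsetP D'D f fD).
    rewrite !in_setD sW dW sC /= andbT; split => //.
    apply/negP => dC; move/negP: sC; apply; move: dC; rewrite /C !inE => dC.
    apply: connect_trans dC (connect1 _); rewrite adj_sym; exact: adjf.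
  - by move=> /(cyc_mono (subsetDl _ _) (subset_trans (subsetDl _ _) D'D)).
  - by rewrite in_setD bW andbT /C inE.
have eq1 : #|D| = #|D'|.+1 by rewrite (cardsD1 e D) eD.
move=> ? ?; lia.
Qed.

Lemma tree_iff (V E : finType) (src dst : E -> V) (W : {set V}) (D : {set E}) :
  W != set0 -> (forall e, e \in D -> src e \in W /\ dst e \in W) ->
  is_tree src dst W D <-> connected_in src dst W D /\ #|D|.+1 = #|W|.
Proof.
move=> Wn hends; case/set0Pn: (Wn) => w wW; split.
- case=> _ _ hc hac; split => //.
  have := conn_card wW hc; have := acyc_card (leqnn _) hends hac wW; lia.
- case=> hc hcard; split => // hcyc.
  case: (conn_remove hc hcyc) => e eD hc'.
  have := conn_card wW hc'; rewrite (cardsD1 e D) eD in hcard; lia.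
Qed.

Lemma connect_map (T1 T2 : finType) (e1 : rel T1) (e2 : rel T2) (h : T1 -> T2) :
  (forall x y, e1 x y -> connect e2 (h x) (h y)) ->
  forall x y, connect e1 x y -> connect e2 (h x) (h y).
Proof.
move=> H x y /connectP[p pP ->]; elim: p x pP => [|z p IH] x /=.
  by move=> _; exact: connect0.
case/andP=> xz zP; exact: connect_trans (H _ _ xz) (IH _ zP).
Qed.

Theorem lemma3p1 (V E : finType) (src dst : E -> V)
    (HT : simple_graph src dst)
    (U : {set V}) (F : {set E})
    (HS : is_tree src dst U F)
    (nbr : 'I_(#|F|).+1 -> V)
    (Hnbr : forall e, e \in F ->
       (exists i, nbr i = src e) /\ (exists i, nbr i = dst e)) :
  is_tree src dst setT setT <->
  is_tree (ext_src src F nbr) (ext_dst dst F nbr) setT (ext_edges F).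
Proof.
have [Un hendsS _ _] := HS.
have [hcS hcardS] := (tree_iff Un hendsS).1 HS.
set adjT := adj_in src dst setT setT.
set adjT' := adj_in (ext_src src F nbr) (ext_dst dst F nbr) setT (ext_edges F).
have subS : forall x y, connect (adj_in src dst U F) x y -> connect adjT x y.
  apply: connect_sub => x y /and3P[_ _ /existsP[e /andP[_ ej]]].
  apply: connect1; rewrite /adjT /adj_in !in_setT /=; apply/existsP; exists e.
  by rewrite in_setT.
have N : forall i, connect adjT (nbr ord0) (nbr i).
  move=> i; case: (set_0Vmem F) => [F0|[f fF]].
    have cF : #|F| = 0 by rewrite F0 cards0.
    have : (i : nat) = 0 by have : (i : nat) < #|F|.+1 := ltn_ord i; lia.
    by move=> i0; have -> : i = ord0 by apply: ord_inj.
  set Im := [set nbr j | j in 'I_(#|F|).+1].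
  have UIm : U \subset Im.
    apply/subsetP => u uU.
    have : 0 < #|U :\ u|.
      have := cardsD1 u U; have := cardsD1 f F; rewrite uU fF; lia.
    rewrite card_gt0 => /set0Pn[u' /setD1P[u'u u'U]].
    case/connectP: (hcS u u' uU u'U) => [[|y p] /= pP lp]; first by rewrite lp eqxx in u'u.
    case/andP: pP => /and3P[_ _ /existsP[g /andP[gF gj]]] _.
    have [[i1 h1] [i2 h2]] := Hnbr g gF.
    move: gj; rewrite /joins => /orP[/andP[/eqP gs _]|/andP[_ /eqP gd]].
      by apply/imsetP; exists i1; rewrite ?h1.
    by apply/imsetP; exists i2; rewrite ?h2.
  have eqU : U == Im.
    rewrite eqEcard UIm /= -hcardS.
    by have := leq_imset_card nbr 'I_(#|F|).+1; rewrite card_ord.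
  have inU : forall j, nbr j \in U.
    by move=> j; rewrite (eqP eqU); apply: imset_f.
  exact: subS (hcS _ _ (inU _) (inU _)).
have adjN : forall i, adjT' (Some (nbr i)) None /\ adjT' None (Some (nbr i)).
  move=> i; rewrite /adjT' /adj_in !in_setT /=; split; apply/existsP; exists (inr i);
    by rewrite inE /joins /= !eqxx ?orbT.
have C1 : forall x y, adjT x y -> connect adjT' (Some x) (Some y).
  move=> x y /and3P[_ _ /existsP[e /andP[_ ej]]].
  case: (boolP (e \in F)) => eF.
    have [[i1 h1] [i2 h2]] := Hnbr e eF.
    have ejj : joins src dst e (src e) (dst e) by rewrite /joins !eqxx.
    case: (joins_inv ej ejj) => -[-> ->].
      rewrite -h1 -h2; apply: connect_trans (connect1 (adjN i1).1) (connect1 (adjN i2).2).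
    rewrite -h1 -h2; apply: connect_trans (connect1 (adjN i2).1) (connect1 (adjN i1).2).
  apply: connect1; rewrite /adjT' /adj_in !in_setT /=; apply/existsP; exists (inl e).
  by rewrite inE eF.
pose g (o : option V) := if o is Some v then v else nbr ord0.
have C2 : forall x y, adjT' x y -> connect adjT (g x) (g y).
  move=> x y /and3P[_ _ /existsP[[e|i] /andP[eF ej]]].
    have ejj : joins (ext_src src F nbr) (ext_dst dst F nbr) (inl e)
      (Some (src e)) (Some (dst e)) by rewrite /joins !eqxx.
    have ae : adjT (src e) (dst e).
      rewrite /adjT /adj_in !in_setT /=; apply/existsP; exists e.
      by rewrite in_setT /joins !eqxx.
    case: (joins_inv ej ejj) => -[-> ->] /=; first exact: connect1.
    by rewrite connect_symA; exact: connect1.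
  have ejj : joins (ext_src src F nbr) (ext_dst dst F nbr) (inr i)
      None (Some (nbr i)) by rewrite /joins !eqxx.
  case: (joins_inv ej ejj) => -[-> ->] /=; first exact: N.
  by rewrite connect_symA; exact: N.
have hV : [set: V] != set0 by case/set0Pn: Un => u _; apply/set0Pn; exists u.
have hV' : [set: option V] != set0 by apply/set0Pn; exists None.
rewrite (tree_iff hV) ?(tree_iff hV'); try by move=> *; rewrite !in_setT.
have cardext : #|ext_edges F| = #|~: F| + #|F|.+1.
  have -> : ext_edges F = inl @: (~: F) :|: inr @: [set: 'I_(#|F|).+1].
    apply/setP => -[e|i]; rewrite !inE.
      have -> : (inl e \in [set inr x | x in [set: 'I_(#|F|).+1]]) = false.
        by apply/negP => /imsetP[? _ h]; discriminate.
      by rewrite mem_imset ?inE ?orbF //; move=> ? ? [].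
    by apply/esym/orP; right; apply/imsetP; exists i.
  rewrite cardsU !card_imset; try by move=> ? ? [].
  have -> : inl @: (~: F) :&: inr @: [set: 'I_(#|F|).+1] = set0.
    apply/setP => x; rewrite !inE.
    by apply/negP => /andP[/imsetP[? _ ->] /imsetP[? _]].
  by rewrite cards0 cardsT card_ord subn0.
have := cardsC F; rewrite cardext !cardsT card_option => hC.
have hcon : connected_in src dst setT setT <->
  connected_in (ext_src src F nbr) (ext_dst dst F nbr) setT (ext_edges F).
  split => hc.
    have toN : forall x, connect adjT' x (Some (nbr ord0)).
      case=> [v|]; last exact: connect1 (adjN ord0).2.
      exact: connect_map C1 _ _ (hc v _ (in_setT _) (in_setT _)).
    move=> x y _ _; apply: connect_trans (toN x) _; rewrite connect_symA; exact: toN.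
  move=> x y _ _; exact: connect_map C2 _ _ (hc (Some x) (Some y) (in_setT _) (in_setT _)).
split; case=> h1 h2; split; try by apply/hcon.
  by have := subset_leq_card (subsetT F); rewrite cardsT; lia.
by have := subset_leq_card (subsetT F); rewrite cardsT; lia.
Qed.
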